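(* Let $\mathbb{E}$ be a finitely complete category, $\Sigma$ a fibrational class of split epimorphisms, and suppose $\mathbb{E}$ is a $\Sigma$-Mal'tsev category. Let $(f,s)\colon X\rightleftarrows Y$ be a split epimorphism in $\Sigma$. Then there is at most one internal monoid structure on the object $(f,s)$ of the fibre $\mathrm{Pt}_Y(\mathbb{E})$, and when such a structure exists it is commutative.
   Context: A split epimorphism is a pair $(f,s)$ with $fs=1$. $\mathrm{Pt}_Y(\mathbb{E})$ is the category of split epimorphisms with codomain $Y$ and morphisms commuting with both the epimorphisms and the splittings; it is finitely complete, with terminal object $(1_Y,1_Y)$ and binary product of $(f,s)$ with itself given by $X\times_YX$ over $Y$. A class $\Sigma$ of split epimorphisms is fibrational if it contains all split epimorphisms $(f,s)$ with $f$ invertible and is stable under pullback along any morphism. A pair of morphisms with common codomain $Z$ is jointly extremally epic if it factors jointly through no non-invertible monomorphism into $Z$. $\mathbb{E}$ is $\Sigma$-Mal'tsev if for every split epimorphism $(f,s)\colon X\rightleftarrows Y$ in $\Sigma$ and every split epimorphism $(g,t)$ with $g\colon Y'\to Y$, letting $X'=Y'\times_YX$, $s'=(1_{Y'},sg)$, $\bar t=(tf,1_X)$, the pair $(s',\bar t)$ is jointly extremally epic. *)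

(* Defs.v *)
Record Category := {
  Obj :> Type;
  Hom : Obj -> Obj -> Type;
  idm : forall A, Hom A A;
  comp : forall A B C, Hom B C -> Hom A B -> Hom A C;
  comp_id_l : forall A B (f : Hom A B), comp A B B (idm B) f = f;
  comp_id_r : forall A B (f : Hom A B), comp A A B f (idm A) = f;
  comp_assoc : forall A B C D (f : Hom A B) (g : Hom B C) (h : Hom C D),
      comp A C D h (comp A B C g f) = comp A B D (comp B C D h g) f
}.
Arguments Hom {c} _ _.
Arguments idm {c} A.
Arguments comp {c A B C} _ _.

Notation "g ∘ f" := (comp g f) (at level 40, left associativity).

Section CatDefs.
Context {C : Category}.

Definition is_iso {A B : C} (f : Hom A B) : Prop :=
  exists g : Hom B A, g ∘ f = idm A /\ f ∘ g = idm B.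

Definition is_mono {M Z : C} (m : Hom M Z) : Prop :=
  forall (T : C) (a b : Hom T M), m ∘ a = m ∘ b -> a = b.

Definition is_terminal (T : C) : Prop :=
  forall A : C, exists! u : Hom A T, True.

Definition is_pullback {A B Z : C} (f : Hom A Z) (g : Hom B Z)
  (P : C) (p : Hom P A) (q : Hom P B) : Prop :=
  f ∘ p = g ∘ q /\
  forall (T : C) (a : Hom T A) (b : Hom T B), f ∘ a = g ∘ b ->
    exists! u : Hom T P, p ∘ u = a /\ q ∘ u = b.

Definition jointly_extremally_epic {A B Z : C} (a : Hom A Z) (b : Hom B Z) : Prop :=
  forall (M : C) (m : Hom M Z) (a' : Hom A M) (b' : Hom B M),
    is_mono m -> m ∘ a' = a -> m ∘ b' = b -> is_iso m.

Definition SplitClass := forall (X Y : C), Hom X Y -> Hom Y X -> Prop.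

Definition fibrational (Sigma : SplitClass) : Prop :=
  (forall X Y (f : Hom X Y) (s : Hom Y X), Sigma X Y f s -> f ∘ s = idm Y) /\
  (forall X Y (f : Hom X Y) (s : Hom Y X), f ∘ s = idm Y -> is_iso f ->
     Sigma X Y f s) /\
  (forall X Y (f : Hom X Y) (s : Hom Y X) Z (h : Hom Z Y)
          (P : C) (g : Hom P Z) (k : Hom P X) (u : Hom Z P),
     Sigma X Y f s -> is_pullback h f P g k ->
     g ∘ u = idm Z -> k ∘ u = s ∘ h -> Sigma P Z g u).

End CatDefs.

(* Finitely complete category, with chosen terminal object and pullbacks.
   pb f g is the chosen pullback of f : A -> Z and g : B -> Z, with
   projections pb1, pb2 and pairing pb_pair (meaningful when f a = g b). *)
Record FinitelyComplete (C : Category) := {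
  term : C;
  term_spec : is_terminal term;
  pb : forall (A B Z : C), Hom A Z -> Hom B Z -> C;
  pb1 : forall (A B Z : C) (f : Hom A Z) (g : Hom B Z), Hom (pb A B Z f g) A;
  pb2 : forall (A B Z : C) (f : Hom A Z) (g : Hom B Z), Hom (pb A B Z f g) B;
  pb_pair : forall (A B Z : C) (f : Hom A Z) (g : Hom B Z) (T : C),
      Hom T A -> Hom T B -> Hom T (pb A B Z f g);
  pb_spec : forall (A B Z : C) (f : Hom A Z) (g : Hom B Z),
      is_pullback f g (pb A B Z f g) (pb1 A B Z f g) (pb2 A B Z f g);
  pb_pair_spec : forall (A B Z : C) (f : Hom A Z) (g : Hom B Z) (T : C)
      (a : Hom T A) (b : Hom T B), f ∘ a = g ∘ b ->
      pb1 A B Z f g ∘ pb_pair A B Z f g T a b = a /\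
      pb2 A B Z f g ∘ pb_pair A B Z f g T a b = b
}.
Arguments term {C} _.
Arguments pb {C} _ {A B Z} _ _.
Arguments pb1 {C} _ {A B Z} _ _.
Arguments pb2 {C} _ {A B Z} _ _.
Arguments pb_pair {C} _ {A B Z} _ _ {T} _ _.

Section Maltsev.
Context {C : Category} (FC : FinitelyComplete C).

(* Σ-Mal'tsev: for (f,s) : X ⇄ Y in Σ and any split epi (g,t) with
   g : Y' -> Y, with X' = Y' ×_Y X (chosen pullback of f along g),
   s' = (1_{Y'}, s g) and t̄ = (t f, 1_X), the pair (s', t̄) is jointly
   extremally epic. *)
Definition Sigma_Maltsev (Sigma : SplitClass) : Prop :=
  forall (X Y : C) (f : Hom X Y) (s : Hom Y X), Sigma X Y f s ->
  forall (Y' : C) (g : Hom Y' Y) (t : Hom Y Y'), g ∘ t = idm Y ->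
    jointly_extremally_epic
      (pb_pair FC g f (idm Y') (s ∘ g))
      (pb_pair FC g f (t ∘ f) (idm X)).

(* The binary product of (f,s) with itself in Pt_Y is X ×_Y X = pb f f
   (structure map f p1, splitting <s,s>); the terminal object is (1_Y,1_Y);
   the unique map (f,s) -> (1_Y,1_Y) is f.  The triple product
   (X ×_Y X) ×_Y X is the chosen pullback of f p1 along f. *)
Definition is_internal_monoid {X Y : C} (f : Hom X Y) (s : Hom Y X)
    (m : Hom (pb FC f f) X) (e : Hom Y X) : Prop :=
  let p1 := pb1 FC f f in
  let p2 := pb2 FC f f in
  let q1 := pb1 FC (f ∘ p1) f in
  let q2 := pb2 FC (f ∘ p1) f in
  (* m : (X ×_Y X, f p1, <s,s>) -> (X, f, s) is a morphism of Pt_Y *)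
  f ∘ m = f ∘ p1 /\ m ∘ pb_pair FC f f s s = s /\
  (* e : (Y, 1, 1) -> (X, f, s) is a morphism of Pt_Y *)
  f ∘ e = idm Y /\ e ∘ idm Y = s /\
  m ∘ pb_pair FC f f (e ∘ f) (idm X) = idm X /\
  m ∘ pb_pair FC f f (idm X) (e ∘ f) = idm X /\
  m ∘ pb_pair FC f f (m ∘ q1) q2 =
  m ∘ pb_pair FC f f (p1 ∘ q1) (m ∘ pb_pair FC f f (p2 ∘ q1) q2).

Definition is_commutative_monoid {X Y : C} (f : Hom X Y) (s : Hom Y X)
    (m : Hom (pb FC f f) X) : Prop :=
  m ∘ pb_pair FC f f (pb2 FC f f) (pb1 FC f f) = m.

End Maltsev.

(* Main.v *)
Require Import Defs.

Section L.
Context {C : Category} (FC : FinitelyComplete C).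

Lemma pb_ext {A B Z T : C} (g : Hom A Z) (h : Hom B Z) (u v : Hom T (pb FC g h)) :
  pb1 FC g h ∘ u = pb1 FC g h ∘ v -> pb2 FC g h ∘ u = pb2 FC g h ∘ v -> u = v.
Proof.
  intros H1 H2.
  destruct (pb_spec C FC A B Z g h) as [Hc Hu].
  assert (E : g ∘ (pb1 FC g h ∘ u) = h ∘ (pb2 FC g h ∘ u)).
  { rewrite !comp_assoc, Hc. reflexivity. }
  destruct (Hu T _ _ E) as [w [_ Hw]].
  transitivity w.
  - symmetry; apply Hw; split; reflexivity.
  - apply Hw; split; symmetry; assumption.
Qed.

Lemma pair1 {A B Z T : C} (g : Hom A Z) (h : Hom B Z) (a : Hom T A) (b : Hom T B) :
  g ∘ a = h ∘ b -> pb1 FC g h ∘ pb_pair FC g h a b = a.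
Proof. intro E. apply (pb_pair_spec C FC _ _ _ g h T a b E). Qed.

Lemma pair2 {A B Z T : C} (g : Hom A Z) (h : Hom B Z) (a : Hom T A) (b : Hom T B) :
  g ∘ a = h ∘ b -> pb2 FC g h ∘ pb_pair FC g h a b = b.
Proof. intro E. apply (pb_pair_spec C FC _ _ _ g h T a b E). Qed.

Lemma equalize {X Y A T1 T2 : C} (f : Hom X Y) (u v : Hom A X) (h : Hom A Y)
  (a : Hom T1 A) (b : Hom T2 A) :
  f ∘ u = h -> f ∘ v = h -> jointly_extremally_epic a b ->
  u ∘ a = v ∘ a -> u ∘ b = v ∘ b -> u = v.
Proof.
  intros Hu Hv Hj Ea Eb.
  assert (Hu' : h ∘ idm A = f ∘ u) by (rewrite comp_id_r; auto).
  assert (Hv' : h ∘ idm A = f ∘ v) by (rewrite comp_id_r; auto).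
  set (pu := pb_pair FC h f (idm A) u).
  set (pv := pb_pair FC h f (idm A) v).
  set (E := pb FC pu pv).
  set (e1 := pb1 FC pu pv). set (e2 := pb2 FC pu pv).
  destruct (pb_spec C FC _ _ _ pu pv) as [Hc Hun].
  fold E e1 e2 in Hc, Hun.
  assert (He : e1 = e2).
  { pose proof (f_equal (fun z => pb1 FC h f ∘ z) Hc) as X1; cbv beta in X1.
    rewrite !comp_assoc in X1. unfold pu, pv in X1.
    rewrite (pair1 _ _ _ _ Hu'), (pair1 _ _ _ _ Hv'), !comp_id_l in X1. exact X1. }
  assert (Huv : u ∘ e1 = v ∘ e1).
  { pose proof (f_equal (fun z => pb2 FC h f ∘ z) Hc) as X1; cbv beta in X1.
    rewrite !comp_assoc in X1. unfold pu, pv in X1.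
    rewrite (pair2 _ _ _ _ Hu'), (pair2 _ _ _ _ Hv') in X1. rewrite <- He in X1. exact X1. }
  assert (fact : forall T (x : Hom T A), u ∘ x = v ∘ x -> exists y, e1 ∘ y = x).
  { intros T x Ex.
    assert (Ep : pu ∘ x = pv ∘ x).
    { apply pb_ext; rewrite !comp_assoc; unfold pu, pv.
      - rewrite (pair1 _ _ _ _ Hu'), (pair1 _ _ _ _ Hv'). reflexivity.
      - rewrite (pair2 _ _ _ _ Hu'), (pair2 _ _ _ _ Hv'). exact Ex. }
    destruct (Hun T x x Ep) as [y [[Hy _] _]]. exists y; exact Hy. }
  destruct (fact _ a Ea) as [a' Ha]. destruct (fact _ b Eb) as [b' Hb].
  assert (Hm : is_mono e1).
  { intros T x y Exy.
    assert (Exy2 : e2 ∘ x = e2 ∘ y) by (rewrite <- He; exact Exy).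
    assert (Ec : pu ∘ (e1 ∘ x) = pv ∘ (e2 ∘ x)) by (rewrite !comp_assoc; f_equal; exact Hc).
    destruct (Hun T _ _ Ec) as [w [_ Hw]].
    transitivity w.
    - symmetry; apply Hw; split; reflexivity.
    - apply Hw; split; symmetry; assumption. }
  destruct (Hj E e1 a' b' Hm Ha Hb) as [g [_ Hg]].
  unfold E in *.
  transitivity (u ∘ (e1 ∘ g)); [rewrite Hg, comp_id_r; reflexivity|].
  transitivity (v ∘ (e1 ∘ g)); [|rewrite Hg, comp_id_r; reflexivity].
  rewrite !comp_assoc. f_equal. exact Huv.
Qed.

End L.

Theorem corollary2p5 (C : Category) (FC : FinitelyComplete C)
  (Sigma : SplitClass) (HSigma : fibrational Sigma)
  (HM : Sigma_Maltsev FC Sigma)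
  (X Y : C) (f : Hom X Y) (s : Hom Y X) (Hfs : Sigma X Y f s) :
  (forall (m m' : Hom (pb FC f f) X) (e e' : Hom Y X),
     is_internal_monoid FC f s m e -> is_internal_monoid FC f s m' e' ->
     m = m' /\ e = e') /\
  (forall (m : Hom (pb FC f f) X) (e : Hom Y X),
     is_internal_monoid FC f s m e -> is_commutative_monoid FC f s m).
Proof.
  assert (Hfs1 : f ∘ s = idm Y) by (destruct HSigma as [H _]; apply H; exact Hfs).
  pose proof (HM X Y f s Hfs X f s Hfs1) as Hj.
  assert (E1 : f ∘ idm X = f ∘ (s ∘ f)) by (rewrite comp_assoc, Hfs1, comp_id_l, comp_id_r; reflexivity).
  assert (E2 : f ∘ (s ∘ f) = f ∘ idm X) by auto.
  split.
  - intros m m' e e' [Hm1 [_ [_ [He [Hu1 [Hu2 _]]]]]] [Hm1' [_ [_ [He' [Hu1' [Hu2' _]]]]]].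
    rewrite comp_id_r in He, He'. subst e e'.
    split; [|reflexivity].
    apply (equalize FC f m m' (f ∘ pb1 FC f f) _ _ Hm1 Hm1' Hj).
    + rewrite Hu2, Hu2'. reflexivity.
    + rewrite Hu1, Hu1'. reflexivity.
  - intros m e [Hm1 [_ [_ [He [Hu1 [Hu2 _]]]]]].
    rewrite comp_id_r in He. subst e.
    unfold is_commutative_monoid.
    assert (Ec : f ∘ pb2 FC f f = f ∘ pb1 FC f f) by (destruct (pb_spec C FC _ _ _ f f) as [H _]; auto).
    assert (swap : forall a b : Hom X X, f ∘ a = f ∘ b ->
      pb_pair FC f f (pb2 FC f f) (pb1 FC f f) ∘ pb_pair FC f f a b = pb_pair FC f f b a).
    { intros a b Eab. apply pb_ext; rewrite comp_assoc.
      - rewrite (pair1 _ _ _ _ _ Ec), (pair2 _ _ _ _ _ Eab), (pair1 _ _ _ _ _ (eq_sym Eab)). reflexivity.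
      - rewrite (pair2 _ _ _ _ _ Ec), (pair1 _ _ _ _ _ Eab), (pair2 _ _ _ _ _ (eq_sym Eab)). reflexivity. }
    assert (Hw : f ∘ (m ∘ pb_pair FC f f (pb2 FC f f) (pb1 FC f f)) = f ∘ pb1 FC f f).
    { rewrite comp_assoc, Hm1, <- comp_assoc, (pair1 _ _ _ _ _ Ec). exact Ec. }
    apply (equalize FC f _ m (f ∘ pb1 FC f f) _ _ Hw Hm1 Hj).
    + rewrite <- comp_assoc, (swap _ _ E1), Hu2, Hu1. reflexivity.
    + rewrite <- comp_assoc, (swap _ _ E2), Hu2, Hu1. reflexivity.
Qed.
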